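(* Let $A\in\mathbb{R}^{s\times n}$ have rank $s\le n$ and let $y\in(\ker A)^\perp$ be a unit vector. Then the vector $v=(A^\dagger)^Ty\in\mathbb{R}^s$ satisfies $$\|v\|=\left|\frac{\det A^{(y)}}{\det\tilde A}\right|=\frac{1}{\|(Ay)^\perp\|}.$$
   Context: $A^\dagger=A^T(AA^T)^{-1}$ is the Moore–Penrose inverse. $\tilde A\colon(\ker A)^\perp\to\mathbb{R}^s$ is the restriction of $A$; $A^{(y)}\colon(\mathbb{R}y\oplus\ker A)^\perp\to\operatorname{im}A^{(y)}$ is the restriction of $A$ to the orthogonal complement of $\mathbb{R}y\oplus\ker A$, viewed as a map onto its $(s-1)$-dimensional image. Determinants of linear maps between inner-product spaces of equal dimension are taken with respect to orthonormal bases (well defined up to sign). $(Ay)^\perp$ denotes the orthogonal projection of $Ay$ onto the orthogonal complement in $\mathbb{R}^s$ of $\operatorname{im}A^{(y)}$, so that $|\det\tilde A|=|\det A^{(y)}|\cdot\|(Ay)^\perp\|$. *)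

(* Defs.v *)
From HB Require Import structures.
From mathcomp Require Import all_boot all_order all_algebra.
Set Implicit Arguments. Unset Strict Implicit. Unset Printing Implicit Defensive.
Import Order.TTheory GRing.Theory Num.Theory.
Local Open Scope ring_scope.

Definition dotv (R : rcfType) n (u v : 'rV[R]_n) : R := (u *m v^T) 0 0.
Definition normv (R : rcfType) n (v : 'rV[R]_n) : R := Num.sqrt (dotv v v).

(* orthogonal complement of the row space of U: its row space is {x | x *m U^T = 0} *)
Definition perpmx (R : rcfType) k n (U : 'M[R]_(k, n)) : 'M[R]_n := kermx U^T.

(* ker A (as row vectors x with A x^T = 0) and (ker A)^perp *)
Definition kerA (R : rcfType) s n (A : 'M[R]_(s, n)) : 'M[R]_n := kermx A^T.
Definition kerperp (R : rcfType) s n (A : 'M[R]_(s, n)) : 'M[R]_n := perpmx (kerA A).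

(* (R y (+) ker A)^perp : domain of A^(y) *)
Definition Wy (R : rcfType) s n (A : 'M[R]_(s, n)) (y : 'rV[R]_n) : 'M[R]_n :=
  perpmx (col_mx y (kerA A)).
(* image of A^(y) inside R^s (x |-> A x, as row vectors x |-> x A^T) *)
Definition imy (R : rcfType) s n (A : 'M[R]_(s, n)) (y : 'rV[R]_n) : 'M[R]_(n, s) :=
  Wy A y *m A^T.

Definition onb (R : rcfType) k m n (Q : 'M[R]_(k, n)) (U : 'M[R]_(m, n)) : Prop :=
  Q *m Q^T = 1%:M /\ (Q == U)%MS.

Definition perpproj (R : rcfType) m n (u : 'rV[R]_n) (U : 'M[R]_(m, n)) : 'rV[R]_n :=
  u *m proj_mx (perpmx U) (<<U>>%MS).

Definition pinv (R : rcfType) s n (A : 'M[R]_(s, n)) : 'M[R]_(n, s) :=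
  A^T *m invmx (A *m A^T).

(* Main.v *)
Require Import Defs.
From HB Require Import structures.
From mathcomp Require Import all_boot all_order all_algebra.
From mathcomp Require Import ring lra.
Import Order.TTheory GRing.Theory Num.Theory.
Set Implicit Arguments. Unset Strict Implicit.
Local Open Scope ring_scope.

Section H.
Variable R : rcfType.

Lemma mulmxtr_eq0 m n (M : 'M[R]_(m,n)) : M *m M^T = 0 -> M = 0.
Proof.
move=> H; apply/matrixP => i j; rewrite mxE.
have : (M *m M^T) i i = 0 by rewrite H mxE.
rewrite mxE => /eqP; rewrite psumr_eq0; last by move=> k _; rewrite mxE -expr2 sqr_ge0.
move/allP => /(_ j (mem_index_enum j)) /=; rewrite mxE -expr2 sqrf_eq0.
by move/eqP.
Qed.

Lemma orth_rank m n (Q : 'M[R]_(m,n)) : Q *m Q^T = 1%:M -> \rank Q = m.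
Proof.
move=> H; apply/eqP; rewrite eqn_leq rank_leq_row /=.
by rewrite -{1}(mxrank1 R m) -H mxrankM_maxl.
Qed.

Lemma orth_trans m n (Q1 Q2 : 'M[R]_(m,n)) : Q1 *m Q1^T = 1%:M -> Q2 *m Q2^T = 1%:M ->
  (Q1 <= Q2)%MS -> exists D : 'M_m, Q1 = D *m Q2 /\ `|\det D| = 1.
Proof.
move=> H1 H2 /submxP [D def]; rewrite def in H1 *; exists D; split => //.
have HD : D *m D^T = 1%:M.
  by rewrite -H1 trmx_mul mulmxA -(mulmxA D) H2 mulmx1.
have : \det D * \det D = 1 by rewrite -{2}(det_tr D) -det_mulmx HD det1.
move=> /(congr1 (fun x => `|x|)); rewrite normrM normr1.
have := normr_ge0 (\det D); move: `|_| => x x0 hx; nra.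
Qed.


Lemma dotv_ge0 n (u : 'rV[R]_n) : 0 <= dotv u u.
Proof. rewrite /dotv mxE; apply: sumr_ge0 => i _; by rewrite mxE -expr2 sqr_ge0. Qed.

Lemma dotv_mx n (u : 'rV[R]_n) : u *m u^T = (dotv u u)%:M.
Proof. by rewrite [u *m u^T]mx11_scalar. Qed.

Lemma trmxZ' m n a (M : 'M[R]_(m,n)) : (a *: M)^T = a *: M^T.
Proof. by apply/matrixP => i j; rewrite !mxE. Qed.

Lemma normvZ n a (u : 'rV[R]_n) : normv (a *: u) = `|a| * normv u.
Proof.
rewrite /normv /dotv trmxZ' -scalemxAl -scalemxAr !mxE mulrA -expr2.
by rewrite sqrtrM ?sqr_ge0 // sqrtr_sqr.
Qed.

Lemma kerperp_sub s n (A : 'M[R]_(s,n)) : (kerperp A <= A)%MS /\ (A <= kerperp A)%MS.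
Proof.
have sA : (A <= kerperp A)%MS.
  by rewrite /kerperp /perpmx /kerA sub_kermx -[A in A *m _]trmxK -trmx_mul mulmx_ker trmx0.
split=> //; rewrite -(mxrank_leqif_sup sA).2.
rewrite /kerperp /perpmx /kerA mxrank_ker mxrank_tr mxrank_ker mxrank_tr.
by rewrite subKn ?rank_leq_col.
Qed.

End H.
Unset Implicit Arguments. Set Strict Implicit.

Theorem lemma3p13 (R : rcfType) (s n : nat) (A : 'M[R]_(s, n)) (y : 'rV[R]_n)
    (Q : 'M[R]_(s, n)) (P0 : 'M[R]_s) (Qy : 'M[R]_(s.-1, n)) (Py : 'M[R]_(s.-1, s)) :
  \rank A = s -> (s <= n)%N ->
  (y <= kerperp A)%MS -> normv y = 1 ->
  onb Q (kerperp A) -> onb P0 (1%:M : 'M[R]_s) ->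
  onb Qy (Wy A y) -> onb Py (imy A y) ->
  let v : 'cV[R]_s := (pinv A)^T *m y^T in
  normv v^T = `|\det (Qy *m A^T *m Py^T)| / `|\det (Q *m A^T *m P0^T)|
  /\ normv v^T = 1 / normv (perpproj (y *m A^T) (imy A y)).
Proof.
have [kA Ak] := @kerperp_sub _ _ _ A.
case: s A Q P0 Qy Py kA Ak => [|k] A Q P0 Qy Py kA Ak rkA _ yk ny [QQ Qk] [PP P1]
  [QyQy Qyw] [PyPy Pyi] v.
  exfalso; have y0 : y = 0.
    by apply/eqP; rewrite -submx0 (submx_trans yk) // (submx_trans kA) // [A]flatmx0 sub0mx.
  by move: ny; rewrite y0 /normv /dotv mul0mx mxE sqrtr0 => /eqP; rewrite eq_sym oner_eq0.
have yy : y *m y^T = 1%:M.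
  by rewrite dotv_mx -(sqr_sqrtr (dotv_ge0 y)) -/(normv y) ny expr1n.
set K := kerA A.
have Wy0 : Wy A y *m (col_mx y K)^T = 0 by rewrite /Wy /perpmx mulmx_ker.
move/eqP: Wy0; rewrite tr_col_mx mul_mx_row row_mx_eq0 => /andP[/eqP Wyy /eqP WyK].
have QyW : (Qy <= Wy A y)%MS by case/andP: Qyw.
have Qyy : Qy *m y^T = 0 by case/submxP: QyW => X ->; rewrite -mulmxA Wyy mulmx0.
have Qyk : (Qy <= kerperp A)%MS.
  by rewrite /kerperp /perpmx sub_kermx; case/submxP: QyW => X ->; rewrite -mulmxA WyK mulmx0.
have rfA : row_free A by rewrite /row_free rkA.
have Mu : A *m A^T \in unitmx.
  rewrite -row_free_unit -kermx_eq0 -submx0.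
  move: rfA; rewrite -kermx_eq0 => /eqP <-; rewrite sub_kermx; apply/eqP/mulmxtr_eq0.
  by rewrite trmx_mul mulmxA -(mulmxA _ A) mulmx_ker mul0mx.
have yA : (y <= A)%MS := submx_trans yk kA.
case/submxP: yA => c yc.
have vc : v^T = c.
  by rewrite /v trmx_mul !trmxK /pinv yc mulmxA -(mulmxA c) mulmxK.
rewrite vc.
have cy : c *m A = y by [].
have imyc : imy A y *m c^T = 0 by rewrite /imy -mulmxA -trmx_mul cy Wyy.
have PyI : (Py <= imy A y)%MS by case/andP: Pyi.
have Pyc : Py *m c^T = 0 by case/submxP: PyI => X ->; rewrite -mulmxA imyc mulmx0.
have QyAI : (Qy *m A^T <= imy A y)%MS by rewrite /imy submxMr.
have QyAc : Qy *m A^T *m c^T = 0.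
  by case/submxP: QyAI => X ->; rewrite -mulmxA imyc mulmx0.
have c0 : c != 0.
  apply/eqP => c0; move: yy; rewrite -cy c0 !mul0mx => /matrixP /(_ 0 0).
  rewrite !mxE eqxx /= => /eqP.
  by rewrite eq_sym oner_eq0.
have d0 : 0 < dotv c c.
  rewrite lt_def dotv_ge0 andbT; apply: contra c0 => /eqP d00.
  by apply/eqP; apply: (@mulmxtr_eq0 R 1 k.+1 c); rewrite dotv_mx d00 raddf0.
set d := dotv c c in d0.
have r0 : 0 < normv c by rewrite /normv sqrtr_gt0.
have rd : normv c ^+ 2 = d by rewrite /normv sqr_sqrtr // ltW.
set r := normv c in r0 rd *.
have cc : c *m c^T = d%:M by rewrite dotv_mx.
have rn0 : r != 0 by rewrite gt_eqF.
pose e := r^-1 *: c.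
pose Q' : 'M[R]_(1 + k, n) := col_mx y Qy.
pose P' : 'M[R]_(1 + k, k.+1) := col_mx e Py.
have Q'Q' : Q' *m Q'^T = 1%:M.
  rewrite /Q' tr_col_mx mul_col_row yy Qyy QyQy.
  have -> : y *m Qy^T = 0 by rewrite -[y]trmxK -trmx_mul Qyy trmx0.
  by rewrite -scalar_mx_block.
have P'P' : P' *m P'^T = 1%:M.
  rewrite /P' tr_col_mx mul_col_row PyPy.
  have -> : e *m Py^T = 0.
    by rewrite /e -scalemxAl -[c]trmxK -trmx_mul Pyc trmx0 scaler0.
  have -> : Py *m e^T = 0 by rewrite /e trmxZ' -scalemxAr Pyc scaler0.
  have -> : e *m e^T = 1%:M.
    rewrite /e trmxZ' -scalemxAr -scalemxAl cc scalerA scale_scalar_mx -rd.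
    by rewrite mulrA -expr2; congr (_%:M); field.
  by rewrite -scalar_mx_block.
have Q'Q : (Q' <= Q)%MS.
  case/andP: Qk => _ kQ.
  by rewrite /Q' col_mx_sub (submx_trans yk kQ) (submx_trans Qyk kQ).
have P'P : (P' <= P0)%MS.
  by case/andP: P1 => _ P1'; apply: submx_trans (submx1 _) P1'.
have [D [Q'D dD]] := orth_trans Q'Q' QQ Q'Q.
have [D' [P'D dD']] := orth_trans P'P' PP P'P.
have hdet1 : `|\det (Q' *m A^T *m P'^T)| = `|\det (Q *m A^T *m P0^T)|.
  rewrite Q'D P'D trmx_mul !mulmxA !det_mulmx -(mulmxA D) det_mulmx !det_tr !normrM dD dD'.
  by rewrite mul1r mulr1.
have det2 : \det (Q' *m A^T *m P'^T) = r^-1 * \det (Qy *m A^T *m Py^T).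
  rewrite /Q' /P' tr_col_mx mul_col_mx mul_col_row.
  have -> : Qy *m A^T *m e^T = 0 by rewrite /e trmxZ' -scalemxAr QyAc scaler0.
  rewrite det_ublock det_mx11 /e trmxZ' -scalemxAr -(mulmxA y) -trmx_mul cy yy.
  by rewrite !mxE eqxx mulr1.
have dnz : \det (Q *m A^T *m P0^T) != 0.
  have QA : (Q <= A)%MS by case/andP: Qk => Qk' _; apply: submx_trans Qk' kA.
  case/submxP: QA => D2 QD2.
  have rQ := orth_rank QQ.
  have D2u : D2 \in unitmx.
    rewrite -row_free_unit /row_free eqn_leq rank_leq_row /=.
    by rewrite -{1}rQ QD2 mxrankM_maxl.
  have P0u : P0^T \in unitmx by rewrite unitmx_tr; case: (mulmx1_unit PP).
  have : Q *m A^T *m P0^T \in unitmx.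
    by rewrite QD2 -(mulmxA D2) !unitmx_mul D2u Mu P0u.
  by rewrite unitmxE unitfE.
split.
  have : `|\det (Qy *m A^T *m Py^T)| != 0.
    apply: contra dnz => /eqP h.
    by rewrite -normr_eq0 -hdet1 det2 normrM h mulr0.
  move: hdet1; rewrite det2 normrM ger0_norm ?invr_ge0 ?ltW // => <- h; field; by rewrite rn0 h.
pose w := y *m A^T.
pose U := perpmx (imy A y).
have capUV : (U :&: <<imy A y>>)%MS = 0.
  set X := (U :&: _)%MS.
  have XU : X *m (imy A y)^T = 0.
    by apply/eqP; rewrite -sub_kermx -/(perpmx _) -/U capmxSl.
  have : (X <= imy A y)%MS by rewrite /X (submx_trans (capmxSr _ _)) // genmxE.
  case/submxP => Y XY; apply: mulmxtr_eq0.
  by rewrite {2}XY trmx_mul mulmxA XU mul0mx.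
pose c' := d^-1 *: c.
have c'U : (c' <= U)%MS.
  rewrite /U /perpmx sub_kermx /c' -scalemxAl.
  by rewrite -[c]trmxK -trmx_mul imyc trmx0 scaler0.
have rc : \rank c = 1%N.
  apply/eqP; rewrite eqn_leq rank_leq_row lt0n mxrank_eq0 c0.
  done.
have rimy : \rank (imy A y) = k.
  by rewrite -(eqmx_rank Pyi) (orth_rank PyPy).
have imyZ : (imy A y <= kermx c^T)%MS by rewrite sub_kermx imyc.
have Zimy : (kermx c^T <= imy A y)%MS.
  by rewrite -(mxrank_leqif_sup imyZ).2 mxrank_ker mxrank_tr rc rimy subn1.
have wV : (w - c' <= <<imy A y>>)%MS.
  rewrite genmxE; apply: submx_trans Zimy; rewrite sub_kermx.
  rewrite mulmxBl /w -(mulmxA y) -trmx_mul cy yy /c' -scalemxAl cc.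
  by rewrite scale_scalar_mx mulVf ?gt_eqF // subrr.
rewrite /perpproj -/w -/U.
have -> : w = c' + (w - c') by rewrite addrC subrK.
rewrite mulmxDl (proj_mx_id capUV c'U) (proj_mx_0 capUV wV) addr0.
rewrite /c' normvZ -/r -rd ger0_norm; last by rewrite invr_ge0 exprn_ge0 // ltW.
by field.
Qed.
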